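(* Let $\mathcal{X},\mathcal{Y},\mathcal{U},\mathcal{Z}$ be finite sets, let $(X,Y)\in\mathcal{X}\times\mathcal{Y}$ have joint distribution $P_{X,Y}$ with $P_X$ and $P_Y$ of full support, and let $f:\mathcal{X}\times\mathcal{Y}\to\mathcal{U}$ and $g:\mathcal{Y}\to\mathcal{Z}$ be deterministic functions. Let $R^*$ be the optimal zero-error rate and $G_{[n]}$ the $n$-th characteristic graph (both defined in the context). Then $$R^*=\lim_{n\to\infty}\frac{1}{n}H_\chi(G_{[n]}).$$
   Context: Setting: $(X^n,Y^n)$ denotes $n$ i.i.d. copies of $(X,Y)$, with distribution $P^n_{X,Y}$. An encoder observes $X^n$ and $(g(Y_t))_{t\le n}$; a decoder observes $Y^n$ and must recover $(f(X_t,Y_t))_{t\le n}$. Let $\{0,1\}^*$ be the set of finite binary words and $l(\cdot)$ the length of a word. An $(n,R_n)$-zero-error source code is a pair $\phi_e:\mathcal{X}^n\times\mathcal{Z}^n\to\{0,1\}^*$, $\phi_d:\mathcal{Y}^n\times\{0,1\}^*\to\mathcal{U}^n$ such that (1) $\phi_e(\mathcal{X}^n\times\mathcal{Z}^n)$ is prefix-free; (2) $R_n=\frac1n\mathbb{E}[l(\phi_e(X^n,(g(Y_t))_{t\le n}))]$; (3) for all $(x^n,y^n)\in\operatorname{supp}P^n_{X,Y}$, $\phi_d(y^n,\phi_e(x^n,(g(y_t))_{t\le n}))=(f(x_t,y_t))_{t\le n}$. A rate $R$ is achievable if there is a sequence of $(n,R_n)$-zero-error codes with $\lim_n R_n=R$;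 $R^*=\inf\{R\ge0: R\text{ achievable}\}$. A probabilistic graph is a triple $(\mathcal{V},\mathcal{E},P_V)$ with vertex set $\mathcal{V}$, edge set $\mathcal{E}$ and a distribution $P_V$ on $\mathcal{V}$. A subset $\mathcal{S}\subseteq\mathcal{V}$ is independent if no two of its vertices are adjacent; a map $c:\mathcal{V}\to\mathcal{C}$ into a finite set is a coloring if every $c^{-1}(i)$ is independent. The chromatic entropy is $H_\chi(G)=\inf\{H(c(V)): c\text{ a coloring of }G\}$, where $V\sim P_V$. The characteristic graph $G_{[n]}$ has vertex set $\mathcal{X}^n\times\mathcal{Z}^n$ with distribution $P^n_{X,g(Y)}$ (the law of $(X^n,(g(Y_t))_{t\le n})$), and $(x^n,z^n)$, $(x'^n,z'^n)$ are adjacent iff $z^n=z'^n$ and there is $y^n\in\mathcal{Y}^n$ with $g(y_t)=z_t$ for all $t$ such that $P_{X,Y}(x_t,y_t)P_{X,Y}(x'_t,y_t)>0$ for all $t\le n$ and $f(x_t,y_t)\ne f(x'_t,y_t)$ for some $t\le n$. *)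

(* Defs.v *)
From HB Require Import structures.
From mathcomp Require Import all_boot all_order all_algebra.
From mathcomp Require Import all_classical all_reals all_analysis.
Set Implicit Arguments. Unset Strict Implicit. Unset Printing Implicit Defensive.
Import Order.TTheory GRing.Theory Num.Theory.
Import numFieldNormedType.Exports.
Local Open Scope classical_set_scope.
Local Open Scope ring_scope.

Section Defs.
Variable R : realType.

Definition log2 (x : R) : R := ln x / ln 2.

(* Shannon entropy (base 2) of a distribution q on a finite type,
   with the convention 0 log 0 = 0 *)
Definition entropy (T : finType) (q : T -> R) : R :=
  - \sum_(t : T | 0 < q t) q t * log2 (q t).

Definition is_joint_dist (X Y : finType) (P : X -> Y -> R) : Prop :=
  (forall x y, 0 <= P x y) /\ \sum_(x : X) \sum_(y : Y) P x y = 1.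

Definition marginalX (X Y : finType) (P : X -> Y -> R) (x : X) : R :=
  \sum_(y : Y) P x y.
Definition marginalY (X Y : finType) (P : X -> Y -> R) (y : Y) : R :=
  \sum_(x : X) P x y.

Definition prodP (X Y : finType) (P : X -> Y -> R) (n : nat)
  (xn : n.-tuple X) (yn : n.-tuple Y) : R :=
  \prod_(t < n) P (tnth xn t) (tnth yn t).

Definition independent (V : finType) (E : V -> V -> Prop) (S : {set V}) : Prop :=
  forall v w, v \in S -> w \in S -> ~ E v w.

Definition is_coloring (V C : finType) (E : V -> V -> Prop) (c : V -> C) : Prop :=
  forall i : C, independent E [set v | c v == i].

Definition push (V C : finType) (PV : V -> R) (c : V -> C) (i : C) : R :=
  \sum_(v : V | c v == i) PV v.

Definition chromatic_entropy (V : finType) (E : V -> V -> Prop) (PV : V -> R) : R :=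
  inf [set h : R | exists (C : finType) (c : V -> C),
         is_coloring E c /\ h = entropy (push PV c)].

Section Source.
Variables (X Y U Z : finType) (P : X -> Y -> R) (f : X -> Y -> U) (g : Y -> Z).

Definition gmap (n : nat) (yn : n.-tuple Y) : n.-tuple Z := map_tuple g yn.
Definition fmap (n : nat) (xn : n.-tuple X) (yn : n.-tuple Y) : n.-tuple U :=
  [tuple f (tnth xn t) (tnth yn t) | t < n].

Definition prefix_free_image (D : Type) (phi_e : D -> seq bool) : Prop :=
  forall a b, prefix (phi_e a) (phi_e b) -> phi_e a = phi_e b.

Definition is_zero_error_code (n : nat)
  (phi_e : n.-tuple X * n.-tuple Z -> seq bool)
  (phi_d : n.-tuple Y -> seq bool -> n.-tuple U) : Prop :=
  prefix_free_image phi_e /\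
  (forall (xn : n.-tuple X) (yn : n.-tuple Y), 0 < prodP P xn yn ->
     phi_d yn (phi_e (xn, gmap yn)) = fmap xn yn).

Definition code_rate (n : nat) (phi_e : n.-tuple X * n.-tuple Z -> seq bool) : R :=
  (n%:R)^-1 * \sum_(xn : n.-tuple X) \sum_(yn : n.-tuple Y)
                 prodP P xn yn * (size (phi_e (xn, gmap yn)))%:R.

Definition achievable (r : R) : Prop :=
  exists (phi_e : forall n, n.-tuple X * n.-tuple Z -> seq bool)
         (phi_d : forall n, n.-tuple Y -> seq bool -> n.-tuple U),
    (forall n, is_zero_error_code (phi_e n) (phi_d n)) /\
    (fun n => code_rate (phi_e n)) @ \oo --> r.

Definition optimal_rate : R := inf [set r : R | 0 <= r /\ achievable r].

Definition char_adj (n : nat) (v w : n.-tuple X * n.-tuple Z) : Prop :=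
  v.2 = w.2 /\
  exists yn : n.-tuple Y, gmap yn = v.2 /\
    (forall t : 'I_n, 0 < P (tnth v.1 t) (tnth yn t) * P (tnth w.1 t) (tnth yn t)) /\
    (exists t : 'I_n, f (tnth v.1 t) (tnth yn t) != f (tnth w.1 t) (tnth yn t)).

Definition char_dist (n : nat) (v : n.-tuple X * n.-tuple Z) : R :=
  \sum_(yn : n.-tuple Y | gmap yn == v.2) prodP P v.1 yn.

Definition char_graph_entropy (n : nat) : R :=
  chromatic_entropy (@char_adj n) (@char_dist n).

End Source.
End Defs.

(* Main.v *)
Require Import Defs.
From HB Require Import structures.
From mathcomp Require Import all_boot all_order all_algebra.
From mathcomp Require Import all_classical all_reals all_analysis.
From mathcomp Require Import ring lra.
Set Implicit Arguments. Unset Strict Implicit. Unset Printing Implicit Defensive.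
Import Order.TTheory GRing.Theory Num.Theory.
Import numFieldNormedType.Exports.
Local Open Scope classical_set_scope.
Local Open Scope ring_scope.
From mathcomp Require Import zify.
Section Fekete.
Variable R : realType.

Lemma subadd_iter (a : nat -> R) (sub : forall m n, a (m + n)%N <= a m + a n) k r q :
  a (q * k + r)%N <= q%:R * a k + a r.
Proof.
elim: q => [|q IH]; first by rewrite mul0n add0n mul0r add0r.
rewrite mulSn -addnA (le_trans (sub _ _)) // -natr1 mulrDl mul1r.
by move: IH; lra.
Qed.

Lemma fekete (a : nat -> R) : (forall n, 0 <= a n) ->
  (forall m n, a (m + n)%N <= a m + a n) ->
  (fun n => n%:R^-1 * a n) @ \oo --> inf (range (fun m : nat => a m.+1 / m.+1%:R)).
Proof.
move=> a0 sub.
set S := range _.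
have hS : has_lbound S by exists 0 => _ [m _ <-]; rewrite divr_ge0.
have S0 : S !=set0 by exists (a 1%N / 1%:R), 0%N.
set L := inf S.
apply/cvgrPdist_lt => e e0.
have e2 : 0 < e / 2 by rewrite divr_gt0.
have [_ [m _ <-] hm] : exists2 y, S y & y < L + e / 2 by apply: inf_lt => //; rewrite ltrDl.
set M := \sum_(r < m.+1) a r.
have M0 : 0 <= M by rewrite sumr_ge0.
have hM : forall r, (r < m.+1)%N -> a r <= M.
  move=> r hr; rewrite /M (bigD1 (Ordinal hr)) //= lerDl sumr_ge0 //.
near=> n.
have n0 : (0 < n)%N by near: n; exists 1%N.
have nM : M / n%:R < e / 2.
  rewrite ltr_pdivrMr ?ltr0n // -ltr_pdivrMl // mulrC.
  near: n; exists (Num.truncn (M / (e / 2))).+1 => // n /= hn.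
  by rewrite -truncn_lt_nat ?divr_ge0 // ltW.
have lo : L <= n%:R^-1 * a n.
  apply: ge_inf => //; by exists n.-1 => //; rewrite prednK // mulrC.
have hi : n%:R^-1 * a n <= a m.+1 / m.+1%:R + M / n%:R.
  have h := subadd_iter sub m.+1 (n %% m.+1) (n %/ m.+1).
  rewrite -(divn_eq n m.+1) in h.
  have qn : (n %/ m.+1)%:R * a m.+1 <= n%:R * (a m.+1 / m.+1%:R).
    rewrite (_ : n%:R * (a m.+1 / m.+1%:R) = n%:R / m.+1%:R * a m.+1); last by ring.
    rewrite ler_wpM2r // ler_pdivlMr ?ltr0n // -natrM ler_nat.
    by rewrite {2}(divn_eq n m.+1) leq_addr.
  have rM := hM _ (ltn_pmod n (ltn0Sn m)).
  have npos : 0 < n%:R :> R by rewrite ltr0n.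
  rewrite mulrC ler_pdivrMr // mulrDl divfK ?gt_eqF //.
  rewrite [_ * n%:R]mulrC; move: h qn rM.
  set t1 := (n %/ m.+1)%:R * _; set t2 := n%:R * _; set t3 := a (n %% m.+1)%N; lra.
rewrite distrC ger0_norm ?subr_ge0 //.
move: lo hi hm nM; set x := n%:R^-1 * a n; set y := a m.+1 / _; set z := M / _; lra.
Unshelve. all: end_near.
Qed.
End Fekete.
Section Entropy.
Variable R : realType.

Lemma ln_le_sub1 (x : R) : 0 < x -> ln x <= x - 1.
Proof. by move=> x0; have := @le_ln1Dx R (x - 1); rewrite [1 + _]addrC subrK; apply; rewrite ltrBrDl subrr. Qed.

Lemma ln2_gt0 : 0 < ln (2 : R).
Proof. by apply: ln_gt0; rewrite ltr1n. Qed.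

Lemma log2M (a b : R) : 0 < a -> 0 < b -> log2 (a * b) = log2 a + log2 b.
Proof. by move=> a0 b0; rewrite /log2 lnM ?posrE // mulrDl. Qed.

Lemma sum_pair (A B : finType) (F : A * B -> R) :
  \sum_(p : A * B) F p = \sum_(a : A) \sum_(b : B) F (a, b).
Proof. by rewrite pair_bigA; apply: eq_bigr => -[a b] _. Qed.

Definition phi (x : R) := if 0 < x then x * log2 x else 0.

Lemma entropyE (T : finType) (q : T -> R) : entropy q = - \sum_t phi (q t).
Proof. by rewrite /entropy big_mkcond. Qed.

Lemma phiM (a b : R) : 0 <= a -> 0 <= b -> phi (a * b) = a * phi b + b * phi a.
Proof.
rewrite le_eqVlt => /orP[/eqP<- | a0]; first by rewrite !mul0r add0r /phi ltxx mulr0.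
rewrite le_eqVlt => /orP[/eqP<- | b0]; first by rewrite !mulr0 mul0r addr0 /phi ltxx mulr0.
rewrite /phi mulr_gt0 // a0 b0 log2M //; ring.
Qed.

Lemma entropy_prod (A B : finType) (q1 : A -> R) (q2 : B -> R) :
  (forall a, 0 <= q1 a) -> (forall b, 0 <= q2 b) ->
  \sum_a q1 a = 1 -> \sum_b q2 b = 1 ->
  entropy (fun p : A * B => q1 p.1 * q2 p.2) = entropy q1 + entropy q2.
Proof.
move=> h1 h2 s1 s2; rewrite !entropyE -opprD; congr (- _).
rewrite sum_pair /=.
under eq_bigr => a _ do under eq_bigr => b _ do rewrite phiM //.
under eq_bigr => a _ do rewrite big_split /= -big_distrr /= -big_distrl /= s2 mul1r.
by rewrite big_split /= -big_distrl /= s1 mul1r addrC.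
Qed.

Lemma entropy_ge0 (T : finType) (q : T -> R) : (forall t, 0 <= q t <= 1) -> 0 <= entropy q.
Proof.
move=> h; rewrite /entropy oppr_ge0 sumr_le0 // => t qt.
rewrite pmulr_rle0 // /log2 pmulr_lle0 ?invr_gt0 ?ln2_gt0 // ln_le0 //.
by case/andP: (h t).
Qed.

Lemma gibbs (T : finType) (q : T -> R) (l : T -> nat) :
  (forall t, 0 <= q t) -> \sum_t q t = 1 -> \sum_t ((2:R) ^+ l t)^-1 <= 1 ->
  entropy q <= \sum_t q t * (l t)%:R.
Proof.
move=> q0 s1 kr.
have key : forall t, (if 0 < q t then - (q t * log2 (q t)) else 0) <=
    q t * (l t)%:R + (((2:R) ^+ l t)^-1 - q t) / ln 2.
  move=> t; have w0 : 0 < ((2:R) ^+ l t)^-1 by rewrite invr_gt0 exprn_gt0.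
  case: ifP => qt.
    have := ln_le_sub1 (divr_gt0 w0 qt).
    rewrite ln_div ?posrE // lnV ?posrE ?exprn_gt0 // lnXn // => h.
    have hh : q t * (- (ln 2 *+ l t) - ln (q t)) <= ((2:R) ^+ l t)^-1 - q t.
      have e1 : q t * (((2:R) ^+ l t)^-1 / q t - 1) = ((2:R) ^+ l t)^-1 - q t.
        by rewrite mulrBr mulr1 mulrCA divff ?gt_eqF // mulr1.
      by rewrite -e1 ler_pM2l.
    have L0 : ln (2:R) != 0 by rewrite gt_eqF // ln2_gt0.
    rewrite -subr_le0.
    have -> : - (q t * log2 (q t)) - (q t * (l t)%:R + (((2:R) ^+ l t)^-1 - q t) / ln 2)
      = (q t * (- (ln 2 *+ l t) - ln (q t)) - (((2:R) ^+ l t)^-1 - q t)) / ln 2.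
      by rewrite /log2 -mulr_natr; field; rewrite mul1r L0 expf_neq0 // pnatr_eq0.
    by rewrite pmulr_lle0 ?invr_gt0 ?ln2_gt0 // subr_le0.
  have -> : q t = 0 by apply/eqP; rewrite eq_le q0 andbT leNgt qt.
  by rewrite mul0r add0r subr0 divr_ge0 // ltW // ln2_gt0.
rewrite entropyE /phi -sumrN.
under eq_bigr => t _ do rewrite (fun_if (fun x => - x)) oppr0.
apply: (le_trans (ler_sum _ (fun t _ => key t))).
rewrite big_split /= gerDl -big_distrl /= pmulr_lle0 ?invr_gt0 ?ln2_gt0 //.
by rewrite sumrB s1 subr_le0.
Qed.

End Entropy.
Section Kraft.

Lemma size_le1 (s : seq (seq bool)) : uniq s -> (forall w, w \in s -> w = [::]) -> (size s <= 1)%N.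
Proof.
move=> us h; apply: (uniq_leq_size (s2 := [:: [::]])) => // w /h ->.
by rewrite inE.
Qed.

Definition pfree (s : seq (seq bool)) :=
  forall a b, a \in s -> b \in s -> prefix a b -> a = b.

Lemma kraft_nat N (s : seq (seq bool)) : uniq s -> pfree s ->
  (forall w, w \in s -> (size w <= N)%N) ->
  (\sum_(w <- s) 2 ^ (N - size w) <= 2 ^ N)%N.
Proof.
elim: N s => [|N IH] s us pf hs.
  have h0 : forall w, w \in s -> w = [::] by move=> w /hs; case: w.
  rewrite (eq_big_seq (fun _ => 1%N)); first by rewrite sum1_size size_le1.
  by move=> w /h0 ->.
have [e|ne] := boolP ([::] \in s).
  have h0 : forall w, w \in s -> w = [::].
    by move=> w ws; apply/esym/pf => //; rewrite prefix0s.
  rewrite (eq_big_seq (fun _ => 2 ^ N.+1)%N); last by move=> w /h0 ->.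
  rewrite big_const_seq count_predT iter_addn_0.
  by rewrite -[X in (_ <= X)%N]muln1 leq_mul2l size_le1 // orbT.
have nonnil : forall w, w \in s -> w = head false w :: behead w.
  by move=> w ws; case: w ws ne => //= ->.
have half : forall b, (\sum_(w <- s | head false w == b) 2 ^ (N.+1 - size w) <= 2 ^ N)%N.
  move=> b; set sb := [seq behead w | w <- s & head false w == b].
  have -> : (\sum_(w <- s | head false w == b) 2 ^ (N.+1 - size w) =
             \sum_(w <- sb) 2 ^ (N - size w))%N.
    rewrite big_map big_filter big_seq_cond [RHS]big_seq_cond; apply: eq_bigr => w /andP[ws _].
    by rewrite (nonnil w ws) /=; case: (size (behead w)) => *; rewrite subSS.
  have hb : forall w, w \in s -> head false w == b -> w = b :: behead w.
    by move=> w ws /eqP <-; exact: nonnil.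
  apply: IH.
  - rewrite map_inj_in_uniq ?filter_uniq // => x y.
    rewrite !mem_filter => /andP[hx xs] /andP[hy ys] e.
    by rewrite (hb x xs hx) (hb y ys hy) e.
  - move=> a' b' /mapP[a]; rewrite mem_filter => /andP[ha as_] ->.
    move=> /mapP[c]; rewrite mem_filter => /andP[hc cs] -> hp.
    have := pf a c as_ cs; rewrite (hb a as_ ha) (hb c cs hc) /= eqxx /= => /(_ hp).
    by case.
  - move=> w /mapP[a]; rewrite mem_filter => /andP[ha as_] ->.
    by have := hs a as_; rewrite (hb a as_ ha) /=.
rewrite (bigID (fun w => head false w == true)) /= expnS mul2n -addnn leq_add //.
rewrite (eq_bigl (fun w => head false w == false)) ?half // => w.
by case: (head false w).
Qed.


Lemma kraft (R : realType) (s : seq (seq bool)) : uniq s -> pfree s ->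
  \sum_(w <- s) ((2:R) ^+ size w)^-1 <= 1.
Proof.
move=> us pf; set N := \max_(w <- s) size w.
have hN : forall w, w \in s -> (size w <= N)%N.
  by move=> w ws; rewrite /N (big_rem w ws) /= leq_maxl.
have k : ((\sum_(w <- s) 2 ^ (N - size w))%:R <= (2 ^ N)%:R :> R).
  by rewrite ler_nat; exact: kraft_nat.
have p0 : 0 < (2:R) ^+ N by rewrite exprn_gt0.
have e : \sum_(w <- s) ((2:R) ^+ size w)^-1 =
    (\sum_(w <- s) 2 ^ (N - size w))%:R / (2:R) ^+ N.
  rewrite natr_sum big_distrl /= big_seq_cond [RHS]big_seq_cond.
  apply: eq_bigr => w /andP[ws _].
  rewrite natrX -{2}(subnK (hN w ws)) exprD invfM mulrA divff ?mul1r //.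
rewrite e ler_pdivrMr // mul1r; move: k; by rewrite natrX.
Qed.
End Kraft.
Section Tuples.
Variable R : realType.

Definition tl (T : Type) m n (t : (m + n).-tuple T) : m.-tuple T :=
  [tuple tnth t (lshift n i) | i < m].
Definition tr (T : Type) m n (t : (m + n).-tuple T) : n.-tuple T :=
  [tuple tnth t (rshift m i) | i < n].
Definition tcat (T : Type) m n (t1 : m.-tuple T) (t2 : n.-tuple T) : (m + n).-tuple T :=
  [tuple of t1 ++ t2].

Lemma tl_cat (T : Type) m n (t1 : m.-tuple T) (t2 : n.-tuple T) : tl (tcat t1 t2) = t1.
Proof. by apply: eq_from_tnth => i; rewrite tnth_mktuple tnth_lshift. Qed.
Lemma tr_cat (T : Type) m n (t1 : m.-tuple T) (t2 : n.-tuple T) : tr (tcat t1 t2) = t2.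
Proof. by apply: eq_from_tnth => i; rewrite tnth_mktuple tnth_rshift. Qed.
Lemma cat_tltr (T : Type) m n (t : (m + n).-tuple T) : tcat (tl t) (tr t) = t.
Proof.
apply: eq_from_tnth => i; case: (splitP i) => [j|k] hi.
  have -> : i = lshift n j by apply: val_inj.
  by rewrite tnth_lshift tnth_mktuple.
have -> : i = rshift m k by apply: val_inj.
by rewrite tnth_rshift tnth_mktuple.
Qed.

Lemma big_tuple_cat (T : finType) m n (F : (m + n).-tuple T -> R) :
  \sum_(t : (m + n).-tuple T) F t =
  \sum_(t1 : m.-tuple T) \sum_(t2 : n.-tuple T) F (tcat t1 t2).
Proof.
rewrite pair_big /= (reindex (fun p : m.-tuple T * n.-tuple T => tcat p.1 p.2)) //.
exists (fun t => (tl t, tr t)) => [[t1 t2] _|t _] /=.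
  by rewrite tl_cat tr_cat.
by rewrite cat_tltr.
Qed.

Lemma big_tuple_prod (T : finType) n (F : 'I_n -> T -> R) :
  \sum_(t : n.-tuple T) \prod_(i < n) F i (tnth t i) = \prod_(i < n) \sum_(x : T) F i x.
Proof.
rewrite bigA_distr_bigA /= (reindex (fun f : {ffun 'I_n -> T} => [tuple f i | i < n])) /=.
  by apply: eq_bigr => f _; apply: eq_bigr => i _; rewrite tnth_mktuple.
exists (fun t : n.-tuple T => [ffun i => tnth t i]) => [f _|t _] /=.
  by apply/ffunP => i; rewrite ffunE tnth_mktuple.
by apply: eq_from_tnth => i; rewrite tnth_mktuple ffunE.
Qed.

End Tuples.

Section Source.
Variables (R : realType) (X Y U Z : finType) (P : X -> Y -> R) (f : X -> Y -> U) (g : Y -> Z).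
Hypothesis P0 : forall x y, 0 <= P x y.
Hypothesis P1 : \sum_(x : X) \sum_(y : Y) P x y = 1.

Notation V n := (n.-tuple X * n.-tuple Z)%type.

Lemma prodP_ge0 n (xn : n.-tuple X) yn : 0 <= prodP P xn yn.
Proof. by apply: prodr_ge0 => i _. Qed.

Lemma prodP_gt0_each n (xn : n.-tuple X) yn : 0 < prodP P xn yn ->
  forall t, 0 < P (tnth xn t) (tnth yn t).
Proof.
move=> h t; rewrite lt_neqAle P0 andbT; apply/negP => /eqP e.
by move: h; rewrite /prodP (bigD1 t) //= -e mul0r ltxx.
Qed.

Lemma prodP_gt0 n (xn : n.-tuple X) yn : (forall t, 0 < P (tnth xn t) (tnth yn t)) ->
  0 < prodP P xn yn.
Proof. by move=> h; apply: prodr_gt0 => i _. Qed.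

Lemma sum_prodP n : \sum_(xn : n.-tuple X) \sum_(yn : n.-tuple Y) prodP P xn yn = 1.
Proof.
under eq_bigr => xn _ do rewrite /prodP (big_tuple_prod (fun t y => P (tnth xn t) y)).
rewrite (big_tuple_prod (fun t x => \sum_y P x y)).
by rewrite (eq_bigr (fun _ => 1)) ?prodr_const ?expr1n // => i _; rewrite -P1.
Qed.


Lemma char_dist_ge0 n (v : V n) : 0 <= char_dist P g v.
Proof. by apply: sumr_ge0 => yn _; exact: prodP_ge0. Qed.

Lemma rate_sum n (G : V n -> R) :
  \sum_(xn : n.-tuple X) \sum_(yn : n.-tuple Y) prodP P xn yn * G (xn, gmap g yn) =
  \sum_(v : V n) char_dist P g v * G v.
Proof.
rewrite sum_pair; apply: eq_bigr => xn _.
under [RHS]eq_bigr => zn _ do rewrite /char_dist /= big_distrl /= big_mkcond /=.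
rewrite exchange_big /=; apply: eq_bigr => yn _.
rewrite (bigD1 (gmap g yn)) //= eqxx big1 ?addr0 // => zn /negbTE hz.
by rewrite eq_sym hz.
Qed.

Lemma sum_char_dist n : \sum_(v : V n) char_dist P g v = 1.
Proof.
rewrite -(sum_prodP n).
have := rate_sum (fun _ => 1); rewrite /= => h.
under eq_bigr do rewrite -[char_dist _ _ _]mulr1.
rewrite -h; apply: eq_bigr => xn _; apply: eq_bigr => yn _; by rewrite mulr1.
Qed.

Lemma char_dist_le1 n (v : V n) : char_dist P g v <= 1.
Proof.
rewrite -(sum_char_dist n) (bigD1 v) //= lerDl sumr_ge0 // => w _.
exact: char_dist_ge0.
Qed.

Definition vjoin m n (v1 : V m) (v2 : V n) : V (m + n) := (tcat v1.1 v2.1, tcat v1.2 v2.2).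
Definition vl m n (v : V (m + n)) : V m := (tl v.1, tl v.2).
Definition vr m n (v : V (m + n)) : V n := (tr v.1, tr v.2).

Lemma vl_join m n (v1 : V m) (v2 : V n) : vl (vjoin v1 v2) = v1.
Proof. by case: v1 => a b; rewrite /vl /vjoin /= !tl_cat. Qed.
Lemma vr_join m n (v1 : V m) (v2 : V n) : vr (vjoin v1 v2) = v2.
Proof. by case: v2 => a b; rewrite /vr /vjoin /= !tr_cat. Qed.

Lemma big_vertex_cat m n (F : V (m + n) -> R) :
  \sum_(v : V (m + n)) F v = \sum_(v1 : V m) \sum_(v2 : V n) F (vjoin v1 v2).
Proof.
rewrite sum_pair big_tuple_cat.
under eq_bigr => t1 _ do under eq_bigr => t2 _ do rewrite big_tuple_cat.
rewrite sum_pair; apply: eq_bigr => a1 _.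
under [RHS]eq_bigr do rewrite sum_pair.
rewrite exchange_big /=; apply: eq_bigr => b1 _.
by [].
Qed.

Lemma gmap_cat m n (y1 : m.-tuple Y) (y2 : n.-tuple Y) :
  gmap g (tcat y1 y2) = tcat (gmap g y1) (gmap g y2).
Proof. by apply: val_inj; rewrite /= map_cat. Qed.

Lemma tcat_eq (T : finType) m n (a c : m.-tuple T) (b d : n.-tuple T) :
  (tcat a b == tcat c d) = (a == c) && (b == d).
Proof.
apply/eqP/andP => [h|[/eqP-> /eqP->] //].
by split; apply/eqP; [rewrite -(tl_cat a b) h tl_cat | rewrite -(tr_cat a b) h tr_cat].
Qed.

Lemma prodP_cat m n (x1 : m.-tuple X) (x2 : n.-tuple X) y1 y2 :
  prodP P (tcat x1 x2) (tcat y1 y2) = prodP P x1 y1 * prodP P x2 y2.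
Proof. by rewrite /prodP big_split_ord /=; congr (_ * _); apply: eq_bigr => i _;
  rewrite ?tnth_lshift ?tnth_rshift. Qed.

Lemma char_dist_join m n (v1 : V m) (v2 : V n) :
  char_dist P g (vjoin v1 v2) = char_dist P g v1 * char_dist P g v2.
Proof.
rewrite /char_dist big_mkcond big_tuple_cat /=.
rewrite [X in _ = X * _]big_mkcond [X in _ = _ * X]big_mkcond big_distrl /=.
apply: eq_bigr => y1 _; rewrite big_distrr /=.
apply: eq_bigr => y2 _; rewrite gmap_cat tcat_eq prodP_cat.
by case: (gmap g y1 == v1.2); case: (gmap g y2 == v2.2); rewrite ?mulr0 ?mul0r.
Qed.

End Source.

Section Chrom.
Variables (R : realType) (V : finType) (E : V -> V -> Prop) (PV : V -> R).
Hypothesis PV0 : forall v, 0 <= PV v.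
Hypothesis PV1 : \sum_v PV v = 1.

Lemma push_ge0 (C : finType) (c : V -> C) i : 0 <= push PV c i.
Proof. by apply: sumr_ge0. Qed.

Lemma push_weighted (C : finType) (c : V -> C) (G : C -> R) :
  \sum_i push PV c i * G i = \sum_v PV v * G (c v).
Proof.
rewrite [RHS](partition_big c xpredT) //=; apply: eq_bigr => i _.
rewrite /push big_distrl /=; apply: eq_bigr => v /eqP <-. by [].
Qed.

Lemma push_sum1 (C : finType) (c : V -> C) : \sum_i push PV c i = 1.
Proof.
have := push_weighted c (fun _ => 1); under eq_bigr do rewrite mulr1.
by move=> ->; under eq_bigr do rewrite mulr1.
Qed.

Lemma push_le1 (C : finType) (c : V -> C) i : push PV c i <= 1.
Proof.
rewrite -(push_sum1 c) (bigD1 i) //= lerDl sumr_ge0 // => j _; exact: push_ge0.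
Qed.

Lemma entropy_push_ge0 (C : finType) (c : V -> C) : 0 <= entropy (push PV c).
Proof. by apply: entropy_ge0 => i; rewrite push_ge0 push_le1. Qed.

Definition chrom_set := [set h : R | exists (C : finType) (c : V -> C),
         is_coloring E c /\ h = entropy (push PV c)].

Lemma chromE : chromatic_entropy E PV = inf chrom_set.
Proof. by []. Qed.

Lemma chrom_lb : has_lbound chrom_set.
Proof. by exists 0 => _ [C [c [_ ->]]]; exact: entropy_push_ge0. Qed.

Lemma chrom_le (C : finType) (c : V -> C) : is_coloring E c ->
  chromatic_entropy E PV <= entropy (push PV c).
Proof. by move=> hc; rewrite chromE; apply: ge_inf; [exact: chrom_lb | exists C, c]. Qed.

Lemma chrom_ge0 : (exists (C : finType) (c : V -> C), is_coloring E c) ->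
  0 <= chromatic_entropy E PV.
Proof.
move=> [C [c hc]]; rewrite chromE; apply: lb_le_inf; first by exists (entropy (push PV c)), C, c.
by move=> _ [C' [c' [_ ->]]]; exact: entropy_push_ge0.
Qed.

Lemma chrom_approx : (exists (C : finType) (c : V -> C), is_coloring E c) ->
  forall e, 0 < e -> exists (C : finType) (c : V -> C),
    is_coloring E c /\ entropy (push PV c) < chromatic_entropy E PV + e.
Proof.
move=> [C [c hc]] e e0.
have [_ [C' [c' [hc' ->]]] lt] : exists2 y, chrom_set y & y < inf chrom_set + e.
  by apply: inf_lt; [exists (entropy (push PV c)), C, c | rewrite ltrDl].
by exists C', c'.
Qed.

End Chrom.

Section Lower.
Variables (R : realType) (X Y U Z : finType) (P : X -> Y -> R) (f : X -> Y -> U) (g : Y -> Z).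
Hypothesis P0 : forall x y, 0 <= P x y.
Hypothesis P1 : \sum_(x : X) \sum_(y : Y) P x y = 1.

Notation V n := (n.-tuple X * n.-tuple Z)%type.

Lemma gt0_mull (a b : R) : 0 <= a -> 0 <= b -> 0 < a * b -> 0 < a.
Proof.
move=> a0 b0; rewrite (lt_neqAle 0 a) a0 andbT; apply: contraTN => /eqP <-.
by rewrite mul0r ltxx.
Qed.

Lemma adj_pos n (v w : V n) : char_adj P f g v w ->
  exists yn, [/\ gmap g yn = v.2, w.2 = v.2, 0 < prodP P v.1 yn, 0 < prodP P w.1 yn &
     exists t, f (tnth v.1 t) (tnth yn t) != f (tnth w.1 t) (tnth yn t)].
Proof.
move=> [e2 [yn [gy [pos ht]]]]; exists yn; split => //.
- apply: prodP_gt0 => t; exact: gt0_mull (pos t).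
- apply: prodP_gt0 => t; apply: (@gt0_mull _ (P (tnth v.1 t) (tnth yn t))) => //.
  by rewrite mulrC.
Qed.

Lemma char_adj_irr n (v : V n) : ~ char_adj P f g v v.
Proof. by move=> [_ [yn [_ [_ [t]]]]]; rewrite eqxx. Qed.

Lemma coloring_exists n : exists (C : finType) (c : V n -> C), is_coloring (@char_adj _ _ _ _ _ P f g n) c.
Proof.
exists (V n : finType), id => i v w; rewrite !inE => /eqP -> /eqP ->.
exact: char_adj_irr.
Qed.

Lemma code_lower n phi_e phi_d : is_zero_error_code P f g phi_e phi_d ->
  char_graph_entropy P f g n <= \sum_(v : V n) char_dist P g v * (size (phi_e v))%:R.
Proof.
move=> [pf dec].
set S := undup (codom phi_e).
have mS : forall v, phi_e v \in S by move=> v; rewrite mem_undup codom_f.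
have ltS : forall v, (index (phi_e v) S < size S)%N by move=> v; rewrite index_mem.
pose c := fun v => Ordinal (ltS v).
have cE : forall v, nth [::] S (c v) = phi_e v by move=> v; rewrite /= nth_index.
have col : is_coloring (@char_adj _ _ _ _ _ P f g n) c.
  move=> i v w; rewrite !inE => /eqP hv /eqP hw /adj_pos [yn [gy e2 pv pw [t ht]]].
  have ee : phi_e v = phi_e w by rewrite -!cE hv hw.
  have := dec v.1 yn pv; have := dec w.1 yn pw.
  have hv' : (v.1, gmap g yn) = v by rewrite gy -surjective_pairing.
  have hw' : (w.1, gmap g yn) = w by rewrite gy -e2 -surjective_pairing.
  rewrite hv' hw' ee => -> /(congr1 (fun u => tnth u t)).
  by rewrite !tnth_mktuple => e; move: ht; rewrite e eqxx.
have PV0 : forall v : V n, 0 <= char_dist P g v by move=> v; exact: char_dist_ge0.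
have PV1 : \sum_(v : V n) char_dist P g v = 1 by exact: sum_char_dist.
apply: (le_trans (chrom_le PV0 PV1 col)).
have kr : \sum_(i : 'I_(size S)) ((2:R) ^+ size (nth [::] S i))^-1 <= 1.
  have -> : \sum_(i : 'I_(size S)) ((2:R) ^+ size (nth [::] S i))^-1 =
            \sum_(w <- S) ((2:R) ^+ size w)^-1 by rewrite (big_nth [::]) big_mkord.
  apply: kraft; first exact: undup_uniq.
  move=> a b; rewrite !mem_undup => /codomP[x ->] /codomP[y ->]; exact: pf.
have q0 : forall i, 0 <= push (char_dist P g (n:=n)) c i by move=> i; exact: push_ge0.
have q1 : \sum_i push (char_dist P g (n:=n)) c i = 1 by exact: push_sum1.
apply: (le_trans (gibbs q0 q1 kr)).
rewrite push_weighted; under eq_bigr => v _ do rewrite cE. by [].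
Qed.

End Lower.

Section Subadd.
Variables (R : realType) (X Y U Z : finType) (P : X -> Y -> R) (f : X -> Y -> U) (g : Y -> Z).
Hypothesis P0 : forall x y, 0 <= P x y.
Hypothesis P1 : \sum_(x : X) \sum_(y : Y) P x y = 1.

Notation V n := (n.-tuple X * n.-tuple Z)%type.

Lemma gmap_tl m n (yn : (m + n).-tuple Y) : gmap g (tl yn) = tl (gmap g yn).
Proof. by apply: eq_from_tnth => i; rewrite /gmap tnth_map !tnth_mktuple tnth_map. Qed.
Lemma gmap_tr m n (yn : (m + n).-tuple Y) : gmap g (tr yn) = tr (gmap g yn).
Proof. by apply: eq_from_tnth => i; rewrite /gmap tnth_map !tnth_mktuple tnth_map. Qed.

Lemma adj_split m n (v w : V (m + n)) : char_adj P f g v w ->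
  char_adj P f g (vl v) (vl w) \/ char_adj P f g (vr v) (vr w).
Proof.
move=> [e2 [yn [gy [pos [t ht]]]]]; case: (splitP t) => [j|k] hj.
  left; split; first by rewrite /vl /= e2.
  exists (tl yn); split; first by rewrite gmap_tl gy.
  split; first by move=> j'; rewrite /vl /= !tnth_mktuple; exact: pos.
  exists j; rewrite /vl /= !tnth_mktuple.
  by have <- : t = lshift n j by apply: val_inj.
right; split; first by rewrite /vr /= e2.
exists (tr yn); split; first by rewrite gmap_tr gy.
split; first by move=> j'; rewrite /vr /= !tnth_mktuple; exact: pos.
exists k; rewrite /vr /= !tnth_mktuple.
by have <- : t = rshift m k by apply: val_inj.
Qed.

Lemma cge_ge0 n : 0 <= char_graph_entropy P f g n.
Proof.
apply: chrom_ge0; [by move=> v; exact: char_dist_ge0 | exact: sum_char_dist | exact: coloring_exists].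
Qed.

Lemma cge_subadd m n :
  char_graph_entropy P f g (m + n) <= char_graph_entropy P f g m + char_graph_entropy P f g n.
Proof.
have PV0 : forall k (v : V k), 0 <= char_dist P g v by move=> k v; exact: char_dist_ge0.
have PV1 : forall k, \sum_(v : V k) char_dist P g v = 1 by move=> k; exact: sum_char_dist.
apply/ler_addgt0Pr => e e0.
have e2 : 0 < e / 2 by rewrite divr_gt0.
have [C1 [c1 [col1 h1]]] := chrom_approx (char_dist P g (n := m)) (coloring_exists P f g m) e2.
have [C2 [c2 [col2 h2]]] := chrom_approx (char_dist P g (n := n)) (coloring_exists P f g n) e2.
pose c := fun v : V (m + n) => (c1 (vl v), c2 (vr v)).
have col : is_coloring (@char_adj _ _ _ _ _ P f g (m + n)) c.
  move=> i v w; rewrite !inE => /eqP hv /eqP hw /adj_split [a|a].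
    by apply: (col1 (c1 (vl v)) _ _ _ _ a); rewrite inE // -[c1 (vl w)]/((c w).1) hw -hv.
  by apply: (col2 (c2 (vr v)) _ _ _ _ a); rewrite inE // -[c2 (vr w)]/((c w).2) hw -hv.
have pc : push (char_dist P g (n := m + n)) c =
    (fun p => push (char_dist P g (n := m)) c1 p.1 * push (char_dist P g (n := n)) c2 p.2).
  apply: funext => -[i j]; rewrite /push big_mkcond big_vertex_cat /=.
  rewrite [X in _ = X * _]big_mkcond [X in _ = _ * X]big_mkcond big_distrl /=.
  apply: eq_bigr => v1 _; rewrite big_distrr /=; apply: eq_bigr => v2 _.
  rewrite /c vl_join vr_join char_dist_join xpair_eqE.
  by case: (c1 v1 == i); case: (c2 v2 == j); rewrite ?mulr0 ?mul0r.
apply: (le_trans (chrom_le (PV0 _) (PV1 _) col)).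
rewrite pc entropy_prod //; last 4 first.
- by move=> a; exact: push_ge0.
- by move=> a; exact: push_ge0.
- exact: push_sum1.
- exact: push_sum1.
move: h1 h2; set a := entropy _; set b := entropy _; set x := char_graph_entropy _ _ _ m.
set y := char_graph_entropy _ _ _ n; lra.
Qed.

End Subadd.

Section Bits.
Fixpoint bits (w a : nat) : seq bool :=
  if w is w'.+1 then odd a :: bits w' a./2 else [::].

Lemma size_bits w a : size (bits w a) = w.
Proof. by elim: w a => //= w IH a; rewrite IH. Qed.

Lemma bits_inj w a b : (a < 2 ^ w)%N -> (b < 2 ^ w)%N -> bits w a = bits w b -> a = b.
Proof.
elim: w a b => [|w IH] a b /=; first by rewrite expn0; case: a; case: b.
move=> ha hb [ho hh].
have ha' : (a./2 < 2 ^ w)%N by rewrite ltn_half_double -mul2n -expnS.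
have hb' : (b./2 < 2 ^ w)%N by rewrite ltn_half_double -mul2n -expnS.
by rewrite -(odd_double_half a) -(odd_double_half b) ho (IH _ _ ha' hb' hh).
Qed.

Lemma prefix_cat2 (a b c d : seq bool) : size a = size c -> prefix (a ++ b) (c ++ d) ->
  a = c /\ exists s, d = b ++ s.
Proof.
move=> sz /prefixP[s e].
have ac : a = c.
  by have := congr1 (take (size a)) e; rewrite -catA !take_size_cat.
split => //; exists s; move: e; rewrite ac -catA => /eqP; rewrite eqseq_cat // => /andP[_ /eqP]. done.
Qed.

End Bits.

Lemma sum_const_seq (R : realType) (T : Type) (s : seq T) (x : R) : \sum_(j <- s) x = x *+ size s.
Proof. by elim: s => [|a s IH]; rewrite ?big_nil ?big_cons ?IH ?mulrS. Qed.

Section Upper.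
Variables (R : realType) (X Y U Z : finType) (P : X -> Y -> R) (f : X -> Y -> U) (g : Y -> Z).
Hypothesis P0 : forall x y, 0 <= P x y.
Hypothesis P1 : \sum_(x : X) \sum_(y : Y) P x y = 1.
Variables (n : nat) (C : finType) (c : n.-tuple X * n.-tuple Z -> C).
Hypothesis col : is_coloring (@char_adj _ _ _ _ _ P f g n) c.
Variables (B : nat) (xd : n.-tuple X).

Notation V := (n.-tuple X * n.-tuple Z)%type.

Definition qq := push (char_dist P g (n := n)) c.
Definition kk (i : C) : nat := if 0 < qq i then (Num.truncn (- log2 (qq i))).+1 else 0%N.
Definition LL k := [seq j <- enum C | (0 < qq j) && (kk j == k)].
Definition rr i := index i (LL (kk i)).
Definition cw i := bits B (kk i) ++ bits (kk i) (rr i).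
Definition enc (v : V) := cw (c v).
Definition dec (yn : n.-tuple Y) (w : seq bool) : n.-tuple U :=
  if [pick xn | (0 < prodP P xn yn) && (enc (xn, gmap g yn) == w)] is Some xn
  then Defs.fmap f xn yn else Defs.fmap f xd yn.

Hypothesis hB : forall i, (kk i < 2 ^ B)%N.

Lemma PV0 : forall v : V, 0 <= char_dist P g v.
Proof. by move=> v; exact: char_dist_ge0. Qed.
Lemma PV1 : \sum_(v : V) char_dist P g v = 1.
Proof. exact: sum_char_dist. Qed.

Lemma qq_ge0 i : 0 <= qq i. Proof. exact: (push_ge0 PV0). Qed.
Lemma qq_sum1 : \sum_i qq i = 1. Proof. exact: (push_sum1 PV1). Qed.

Lemma pow_lt_qq i : 0 < qq i -> ((2:R) ^+ kk i)^-1 < qq i.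
Proof.
move=> qi; rewrite -ltr_ln ?posrE ?invr_gt0 ?exprn_gt0 //.
rewrite lnV ?posrE ?exprn_gt0 // lnXn // /kk qi.
have := truncnS_gt (- log2 (qq i)); set k := (Num.truncn _).+1 => hk.
have L2 := ln2_gt0 R.
have -> : ln (qq i) = log2 (qq i) * ln 2 by rewrite /log2 divfK ?gt_eqF.
rewrite -[ln 2 *+ k]mulr_natl -mulNr ltr_pM2r // ltrNl. exact: hk.
Qed.

Lemma size_LL k : (size (LL k) <= 2 ^ k)%N.
Proof.
have h1 : \sum_(j <- LL k) qq j <= 1.
  rewrite -qq_sum1 big_filter big_enum_cond /= big_mkcond [leRHS]big_mkcond /=.
  apply: ler_sum => j _; case: ifP => _ //; exact: qq_ge0.
have h2 : ((2:R) ^+ k)^-1 *+ size (LL k) <= \sum_(j <- LL k) qq j.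
  rewrite -sum_const_seq big_seq [leRHS]big_seq; apply: ler_sum => j.
  rewrite mem_filter => /andP[/andP[qj /eqP <-] _]; exact/ltW/pow_lt_qq.
have := le_trans h2 h1; rewrite -[_ *+ size _]mulr_natr mulrC ler_pdivrMr ?exprn_gt0 //.
by rewrite mul1r -natrX ler_nat.
Qed.


Lemma mem_LL i : 0 < qq i -> i \in LL (kk i).
Proof. by move=> qi; rewrite mem_filter qi eqxx mem_enum. Qed.

Lemma rr_lt i : 0 < qq i -> (rr i < 2 ^ kk i)%N.
Proof.
move=> qi; apply: (leq_trans _ (size_LL (kk i))).
by rewrite /rr index_mem mem_LL.
Qed.

Lemma cw_pfree i j : prefix (cw i) (cw j) -> cw i = cw j.
Proof.
rewrite /cw => /prefix_cat2; rewrite !size_bits => /(_ erefl) [/bits_inj e [s hs]].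
have kij : kk i = kk j by apply: e.
move: hs; rewrite -kij => hs.
have : size (bits (kk i) (rr j)) = size (bits (kk i) (rr i) ++ s) by rewrite hs.
rewrite size_cat !size_bits => /eqP; rewrite -{1}[kk i]addn0 eqn_add2l eq_sym size_eq0 => /eqP s0.
by rewrite hs s0 cats0.
Qed.

Lemma cw_inj i j : 0 < qq i -> 0 < qq j -> cw i = cw j -> i = j.
Proof.
move=> qi qj /eqP; rewrite /cw eqseq_cat ?size_bits // => /andP[/eqP /bits_inj e1 /eqP e2].
have kij : kk i = kk j by apply: e1.
move: e2; rewrite kij => /bits_inj e2.
have rij : rr i = rr j by apply: e2; [rewrite -kij; exact: rr_lt | exact: rr_lt].
have := nth_index i (mem_LL qi); have := nth_index i (mem_LL qj).
move: rij; rewrite /rr -kij => ->; by move=> -> .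
Qed.

Lemma qq_pos (v : V) (yn : n.-tuple Y) : gmap g yn = v.2 -> 0 < prodP P v.1 yn -> 0 < qq (c v).
Proof.
move=> gy pos; rewrite /qq /push (bigD1 v) //=.
apply: (@lt_le_trans _ _ (char_dist P g v)); last first.
  by rewrite lerDl sumr_ge0 // => w _; exact: PV0.
rewrite /char_dist (bigD1 yn) ?gy //=.
apply: (lt_le_trans pos); rewrite lerDl sumr_ge0 // => y _; exact: prodP_ge0.
Qed.


Lemma code_ok : is_zero_error_code P f g enc dec.
Proof.
split; first by move=> a b; exact: cw_pfree.
move=> xn yn pos; rewrite /dec; case: pickP => [x' /andP[pos' /eqP e] | none]; last first.
  by move: (none xn); rewrite pos eqxx.
have q1 := qq_pos (v := (xn, gmap g yn)) erefl pos.
have q2 := qq_pos (v := (x', gmap g yn)) erefl pos'.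
have cc := cw_inj q2 q1 e.
have nadj : ~ char_adj P f g (x', gmap g yn) (xn, gmap g yn).
  by apply: (col (i := c (xn, gmap g yn))); rewrite inE ?cc eqxx.
apply: eq_from_tnth => t; rewrite !tnth_mktuple.
apply/eqP; apply: contraT => ne; exfalso; apply: nadj.
split => //; exists yn; split => //; split; last by exists t.
move=> t'; apply: mulr_gt0; exact: prodP_gt0_each.
Qed.

Lemma code_len : \sum_(v : V) char_dist P g v * (size (enc v))%:R <= entropy qq + B%:R + 1.
Proof.
rewrite -(push_weighted _ c (fun i => (size (cw i))%:R)).
under eq_bigr => i _ do rewrite /cw size_cat !size_bits natrD mulrDr.
rewrite big_split /= -big_distrl /= qq_sum1 mul1r.
suff key : \sum_i qq i * (kk i)%:R <= entropy qq + 1.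
  move: key; rewrite /qq; set S := \sum_i _; set H := entropy _; lra.
have -> : entropy qq + 1 = \sum_i ((if 0 < qq i then - (qq i * log2 (qq i)) else 0) + qq i).
  rewrite big_split /= qq_sum1 entropyE /phi -sumrN; congr (_ + _).
  by apply: eq_bigr => i _; case: ifP; rewrite ?oppr0.
apply: ler_sum => i _.
have q0 := qq_ge0 i.
rewrite /kk; case: ifP => qi; last first.
  by rewrite mulr0 add0r.
have x0 : 0 <= - log2 (qq i).
  rewrite oppr_ge0 /log2 pmulr_lle0 ?invr_gt0 ?ln2_gt0 // ln_le0 //.
  by rewrite -qq_sum1 (bigD1 i) //= lerDl sumr_ge0 // => j _; exact: qq_ge0.
have hk : (Num.truncn (- log2 (qq i))).+1%:R <= - log2 (qq i) + 1.
  by rewrite -natr1 lerD2r truncn_le.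
apply: (le_trans (ler_wpM2l q0 hk)); by rewrite mulrDr mulr1 mulrN.
Qed.

End Upper.

Lemma sq_le_pow2 d : ((4 + d) * (4 + d) <= 2 ^ (4 + d))%N.
Proof.
elim: d => [//|d IH].
rewrite addnS expnS; have : (2 * ((4 + d) * (4 + d)) <= 2 * 2 ^ (4 + d))%N by rewrite leq_mul2l IH.
by apply: leq_trans; nia.
Qed.

Lemma lin_lt_pow2 a b : exists T0, forall t, (T0 <= t)%N -> (a * t + b < 2 ^ t)%N.
Proof.
exists (a + b + 4) => t ht.
have := sq_le_pow2 (t - 4); rewrite subnKC; last by lia.
by apply: leq_trans; nia.
Qed.

Lemma eventually_small K M : (0 < K)%N -> exists N, forall n, (N <= n)%N ->
  ((trunc_log 2 (n * K + 1) + 3) * M <= n)%N.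
Proof.
move=> K0; have [T0 hT] := lin_lt_pow2 (M * K) (3 * M * K + 1).
exists ((T0 + 3) * M) => n hn.
set t := trunc_log 2 (n * K + 1).
have [lt|ge] := ltnP t T0.
  apply: leq_trans hn; rewrite leq_mul2r; apply/orP; right; lia.
have h1 := hT t ge.
have h2 : (2 ^ t <= n * K + 1)%N by apply: trunc_logP; lia.
have : ((t + 3) * M * K < n * K)%N by nia.
rewrite ltn_mul2r => /andP[_]; lia.
Qed.

Section Small.
Variable R : realType.
Lemma small_cvg K : (0 < K)%N ->
  (fun n : nat => ((trunc_log 2 (n * K + 1)).+3)%:R / n%:R : R) @ \oo --> (0 : R).
Proof.
move=> K0; apply/cvgrPdist_lt => e e0.
set M := (Num.truncn e^-1).+1.
have [N hN] := eventually_small M K0.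
near=> n.
have hn : (N.+1 <= n)%N by near: n; exists N.+1.
have n0 : 0 < n%:R :> R by rewrite ltr0n; lia.
rewrite sub0r normrN ger0_norm ?divr_ge0 //.
rewrite ltr_pdivrMr //.
have h := hN n (ltnW hn).
have hM : e^-1 < M%:R by exact: truncnS_gt.
have : (trunc_log 2 (n * K + 1)).+3%:R * M%:R <= n%:R :> R.
  by rewrite -natrM ler_nat -addn3.
have M0 : 0 < M%:R :> R by rewrite ltr0n.
move=> h3.
have : (trunc_log 2 (n * K + 1)).+3%:R < e * M%:R * (trunc_log 2 (n * K + 1)).+3%:R :> R.
  rewrite -[X in X < _]mul1r ltr_pM2r ?ltr0n //.
  by move: hM; rewrite -(ltr_pM2l e0) mulfV ?gt_eqF.
move=> h4; apply: (lt_le_trans h4).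
rewrite -mulrA ler_pM2l // mulrC //.
Unshelve. all: end_near.
Qed.
End Small.

Lemma pos_min (R : realType) (T : finType) (F : T -> R) :
  exists pm : R, 0 < pm /\ forall t, 0 < F t -> pm <= F t.
Proof.
exists (\big[Order.min/1]_(t | 0 < F t) F t); split.
  by apply: (big_ind (fun x => 0 < x)) => // x y x0 y0; rewrite lt_min x0 y0.
by move=> t ht; rewrite (bigD1 t) //= ge_min lexx.
Qed.

Section Main.
Variables (R : realType) (X Y U Z : finType) (P : X -> Y -> R) (f : X -> Y -> U) (g : Y -> Z).
Hypothesis P0 : forall x y, 0 <= P x y.
Hypothesis P1 : \sum_(x : X) \sum_(y : Y) P x y = 1.
Variables (pm : R).
Hypothesis pm0 : 0 < pm.
Hypothesis hpm : forall x y, 0 < P x y -> pm <= P x y.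

Notation V n := (n.-tuple X * n.-tuple Z)%type.

Definition KK := (Num.truncn (- log2 pm)).+1.

Lemma term_le_sum (T : finType) (F : T -> R) (Q : pred T) t : (forall t, 0 <= F t) -> Q t ->
  F t <= \sum_(s | Q s) F s.
Proof. by move=> F0 qt; rewrite (bigD1 t) //= lerDl sumr_ge0. Qed.

Lemma prodP_lb n (xn : n.-tuple X) yn : 0 < prodP P xn yn -> pm ^+ n <= prodP P xn yn.
Proof.
move=> pos; rewrite /prodP -[in pm ^+ n](card_ord n) -prodr_const.
apply: ler_prod => t _; rewrite ltW //=; apply: hpm; exact: prodP_gt0_each.
Qed.

Lemma qq_lb n (C : finType) (c : V n -> C) i : 0 < qq P g c i -> pm ^+ n <= qq P g c i.
Proof.
move=> qi.
have PV0 : forall v : V n, 0 <= char_dist P g v by move=> v; exact: char_dist_ge0.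
have : qq P g c i != 0 by rewrite gt_eqF.
rewrite /qq /push psumr_neq0 // => /hasP[v _ /andP[cv dv]].
apply: (le_trans _ (@term_le_sum _ (char_dist P g (n:=n)) (fun s => c s == i) v PV0 cv)).
have : char_dist P g v != 0 by rewrite gt_eqF.
rewrite /char_dist psumr_neq0 => [/hasP[yn _ /andP[gy py0]]|yn _]; last exact: prodP_ge0.
apply: le_trans (prodP_lb py0) _.
apply: (@term_le_sum _ (fun yn => prodP P v.1 yn) (fun yn => gmap g yn == v.2) yn) => // y; exact: prodP_ge0.
Qed.

Lemma kk_lt n (C : finType) (c : V n -> C) i :
  (kk P g c i < 2 ^ (trunc_log 2 (n * KK + 1)).+1)%N.
Proof.
apply: leq_ltn_trans (trunc_log_ltn _ _) => //.
rewrite /kk; case: ifP => qi //.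
rewrite addn1 ltnS truncn_le_nat.
have hl := qq_lb qi.
have pn0 : 0 < pm ^+ n by rewrite exprn_gt0.
have L2 := ln2_gt0 R.
have h1 : - log2 (qq P g c i) <= n%:R * (- log2 pm).
  rewrite mulrN lerN2 /log2 mulrA ler_pM2r ?invr_gt0 //.
  by rewrite mulr_natl -lnXn // ler_ln ?posrE.
have h2 : - log2 pm < KK%:R by exact: truncnS_gt.
have h3 : n%:R * (- log2 pm) <= n%:R * KK%:R by rewrite ler_wpM2l // ltW.
by rewrite -[(n * KK).+1]addn1 natrD natrM; apply: (le_lt_trans h1); apply: (le_lt_trans h3); rewrite ltrDl.
Qed.

Lemma good_code n (x0 : X) : exists (pe : V n -> seq bool) pd,
  is_zero_error_code P f g pe pd /\
  \sum_(v : V n) char_dist P g v * (size (pe v))%:R <=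
     char_graph_entropy P f g n + ((trunc_log 2 (n * KK + 1)).+3)%:R.
Proof.
have [C [c [col h]]] := chrom_approx (char_dist P g (n := n)) (coloring_exists P f g n) ltr01.
set B := (trunc_log 2 (n * KK + 1)).+1.
exists (enc P g c B), (dec P f g c B [tuple x0 | _ < n]); split.
  exact: (code_ok P0 P1 col _ (kk_lt c)).
apply: le_trans (code_len g P0 P1 c B) _.
rewrite (_ : (trunc_log 2 (n * KK + 1)).+3 = B + 2)%N ?natrD; last by rewrite /B addn2.
move: h; rewrite /qq; set H := entropy _; set G := char_graph_entropy _ _ _ _; lra.
Qed.

End Main.

Unset Implicit Arguments.
Theorem theorem1 (R : realType) (X Y U Z : finType) (P : X -> Y -> R)
  (f : X -> Y -> U) (g : Y -> Z)
  (hP : is_joint_dist P)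
  (hX : forall x : X, 0 < marginalX P x)
  (hY : forall y : Y, 0 < marginalY P y) :
  (fun n : nat => (n%:R)^-1 * char_graph_entropy P f g n) @ \oo
    --> optimal_rate P f g.
Proof.
have [P0 P1] := hP.
have [x0 _] : exists x : X, True.
  case: (pickP (xpredT : pred X)) => [x _|none]; first by exists x.
  by move: P1; rewrite big_pred0 // => /esym/eqP; rewrite oner_eq0.
have [pm [pm0 hpm']] := pos_min (fun p : X * Y => P p.1 p.2).
have hpm : forall x y, 0 < P x y -> pm <= P x y by move=> x y; exact: (hpm' (x, y)).
have h0 : forall n, 0 <= char_graph_entropy P f g n by move=> n; exact: cge_ge0.
have hsub : forall m n, char_graph_entropy P f g (m + n) <=
    char_graph_entropy P f g m + char_graph_entropy P f g n by move=> m n; exact: cge_subadd.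
have fk := @fekete R (fun n => char_graph_entropy P f g n) h0 hsub.
set Lh := inf _ in fk.
suff -> : optimal_rate P f g = Lh by [].
have gc := fun n => @good_code R X Y U Z P f g P0 P1 pm pm0 hpm n x0.
pose pe := fun n => proj1_sig (cid (gc n)).
pose pd := fun n => proj1_sig (cid (proj2_sig (cid (gc n)))).
have hpd : forall n, is_zero_error_code P f g (pe n) (pd n) /\
   \sum_(v : n.-tuple X * n.-tuple Z) char_dist P g v * (size (pe n v))%:R <=
     char_graph_entropy P f g n + ((trunc_log 2 (n * KK pm + 1)).+3)%:R.
  by move=> n; exact: (proj2_sig (cid (proj2_sig (cid (gc n))))).
have rE : forall n (phi : n.-tuple X * n.-tuple Z -> seq bool),
    code_rate P g phi = n%:R^-1 * \sum_(v : n.-tuple X * n.-tuple Z) char_dist P g v * (size (phi v))%:R.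
  by move=> n phi; rewrite /code_rate (rate_sum P g (fun v => (size (phi v))%:R)).
have lower : forall n phi_e phi_d, is_zero_error_code P f g phi_e phi_d ->
    n%:R^-1 * char_graph_entropy P f g n <= code_rate P g (n := n) phi_e.
  by move=> n phi_e phi_d hz; rewrite rE ler_wpM2l ?invr_ge0 // (code_lower P0 P1 hz).
have hrate : (fun n => code_rate P g (pe n)) @ \oo --> Lh.
  apply: (@squeeze_cvgr _ _ _ _ (fun n => n%:R^-1 * char_graph_entropy P f g n)
     (fun n => n%:R^-1 * char_graph_entropy P f g n +
        ((trunc_log 2 (n * KK pm + 1)).+3)%:R / n%:R)).
  - near=> n; apply/andP; split; first exact: (lower n (pe n) (pd n) (hpd n).1).
    rewrite rE [X in X <= _]mulrC [n%:R^-1 * char_graph_entropy _ _ _ _]mulrC -mulrDl.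
    rewrite ler_wpM2r ?invr_ge0 //; exact: (hpd n).2.
  - exact: fk.
  - rewrite -[Lh]addr0; apply: cvgD; first exact: fk.
    exact: small_cvg.
have Lh0 : 0 <= Lh.
  apply: lb_le_inf; first by exists (char_graph_entropy P f g 1 / 1%:R), 0%N.
  by move=> _ [m _ <-]; rewrite divr_ge0 // h0.
set S := [set r : R | 0 <= r /\ achievable P f g r].
have LS : S Lh by split => //; exists pe, pd; split => // n; exact: (hpd n).1.
have lbS : lbound S Lh.
  move=> r [r0 [pe' [pd' [hz hc]]]]; apply: (ler_cvg_to fk hc).
  near=> n; exact: (lower n (pe' n) (pd' n) (hz n)).
rewrite /optimal_rate -/S; apply/eqP; rewrite eq_le; apply/andP; split.
  by apply: ge_inf => //; exists 0 => r [].
by apply: lb_le_inf => //; exists Lh.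
Unshelve. all: end_near.
Qed.
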